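(* Let $\varphi:\mathbb{R}^n\to[0,\infty]$ be a geometric convex function. Then for all $s,t>0$, \[ \left(\underline{K}_{1/s}(\varphi)\right)^{\circ}\subseteq\underline{K}_{s}(\varphi^{\circ})\subseteq(st+1)\left(\underline{K}_{t}(\varphi)\right)^{\circ}. \]
   Context: A geometric convex function is a lower semi-continuous convex function $\varphi:\mathbb{R}^n\to[0,\infty]$ with $\varphi(0)=0$. The polarity transform is $\varphi^{\circ}(x)=\sup_{y\in\mathbb{R}^n}\frac{\langle x,y\rangle-1}{\varphi(y)}$, with conventions $\frac{+}{0}=\infty$, $\frac{0}{0}=0$, $\frac{-}{0}=0$. For $t\ge0$, $\underline{K}_t(\varphi)=\{x\in\mathbb{R}^n:\varphi(x)\le t\}$. For a set $A\subseteq\mathbb{R}^n$, $A^{\circ}=\{x:\sup_{y\in A}\langle x,y\rangle\le1\}$. *)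

(* Defs.v *)
From mathcomp Require Import all_boot.
From Stdlib Require Import Reals ClassicalEpsilon.
Set Implicit Arguments.
Unset Strict Implicit.
Open Scope R_scope.

Definition vec (n : nat) := 'I_n -> R.

Definition vadd n (x y : vec n) : vec n := fun i => x i + y i.
Definition vscale n (c : R) (x : vec n) : vec n := fun i => c * x i.
Definition vzero n : vec n := fun _ => 0.
Definition inner n (x y : vec n) : R := \big[Rplus/0]_(i < n) (x i * y i).
Definition dist n (x y : vec n) : R :=
  sqrt (\big[Rplus/0]_(i < n) ((x i - y i) * (x i - y i))).

Inductive ereal := Fin (r : R) | PInf.

Definition ele (a b : ereal) : Prop :=
  match a, b with
  | _, PInf => True
  | PInf, Fin _ => False
  | Fin r, Fin s => r <= s
  end.
Definition elt (a b : ereal) : Prop := ele a b /\ a <> b.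

Definition nonneg_valued n (phi : vec n -> ereal) := forall x, ele (Fin 0) (phi x).
Definition convex_fun n (phi : vec n -> ereal) :=
  forall (x y : vec n) (a b l : R), phi x = Fin a -> phi y = Fin b -> 0 < l < 1 ->
    ele (phi (vadd (vscale (1 - l) x) (vscale l y))) (Fin ((1 - l) * a + l * b)).
Definition lsc n (phi : vec n -> ereal) :=
  forall (x : vec n) (c : R), elt (Fin c) (phi x) ->
    exists d, 0 < d /\ forall y, dist x y < d -> elt (Fin c) (phi y).
Definition geometric_convex n (phi : vec n -> ereal) :=
  nonneg_valued phi /\ lsc phi /\ convex_fun phi /\ phi (@vzero n) = Fin 0.

(* the quotient (a - 1)/phi(y) with the conventions +/0 = oo, 0/0 = 0, -/0 = 0,
   and (finite)/oo = 0 *)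
Definition equot (a : R) (b : ereal) : ereal :=
  match b with
  | PInf => Fin 0
  | Fin r => if Req_EM_T r 0 then (if Rlt_dec 0 a then PInf else Fin 0)
             else Fin (a / r)
  end.

Definition is_esup (E : ereal -> Prop) (m : ereal) :=
  (forall e, E e -> ele e m) /\ (forall u, (forall e, E e -> ele e u) -> ele m u).
Definition esup (E : ereal -> Prop) : ereal :=
  epsilon (inhabits PInf) (fun m => is_esup E m).

Definition polar n (phi : vec n -> ereal) : vec n -> ereal :=
  fun x => esup (fun e => exists y, e = equot (inner x y - 1) (phi y)).

Definition sublevel n (phi : vec n -> ereal) (t : R) : vec n -> Prop :=
  fun x => ele (phi x) (Fin t).
Definition polar_set n (A : vec n -> Prop) : vec n -> Prop :=
  fun x => forall y, A y -> inner x y <= 1.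
Definition dilate n (c : R) (A : vec n -> Prop) : vec n -> Prop :=
  fun x => exists z, A z /\ x = vscale c z.
Definition vsubset n (A B : vec n -> Prop) := forall x, A x -> B x.

(* Main.v *)
Require Import Defs.
From mathcomp Require Import all_boot.
From Stdlib Require Import Reals.
From Stdlib Require Import Lra Classical ClassicalEpsilon FunctionalExtensionality.
Open Scope R_scope.
From HB Require Import structures.

Lemma Rplus_0_l' : left_id 0 Rplus. Proof. move=> x; ring. Qed.
Lemma Rplus_assoc' : associative Rplus. Proof. move=> x y z; ring. Qed.
Lemma Rplus_comm' : commutative Rplus. Proof. move=> x y; ring. Qed.
HB.instance Definition _ := Monoid.isComLaw.Build R 0 Rplus Rplus_assoc' Rplus_comm' Rplus_0_l'.

Lemma bigR_lin (n : nat) (F G : 'I_n -> R) (a b : R) :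
  \big[Rplus/0]_(i < n) (a * F i + b * G i) =
  a * \big[Rplus/0]_(i < n) F i + b * \big[Rplus/0]_(i < n) G i.
Proof.
elim: n F G => [|n IH] F G.
- rewrite !big_ord0; ring.
- rewrite !big_ord_recr /=.
  rewrite (IH (fun i => F (widen_ord (leqnSn n) i)) (fun i => G (widen_ord (leqnSn n) i))).
  set u := bigop.body _ _ _. set v := bigop.body _ _ _. ring.
Qed.

Lemma inner_lin n (x u v : vec n) a b :
  inner x (vadd (vscale a u) (vscale b v)) = a * inner x u + b * inner x v.
Proof.
rewrite /inner -bigR_lin. apply: eq_bigr => i _. rewrite /vadd /vscale. ring.
Qed.

Lemma inner_zero n (x : vec n) : inner x (@vzero n) = 0.
Proof.
rewrite /inner (eq_bigr (fun i => 0 * x i + 0 * x i)).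
- rewrite bigR_lin; set u := bigop.body _ _ _; ring.
- move=> i _; rewrite /vzero; ring.
Qed.

Lemma inner_scale_l n (x y : vec n) c : inner (vscale c x) y = c * inner x y.
Proof.
rewrite /inner (eq_bigr (fun i => c * (x i * y i) + 0 * (x i * y i))).
- rewrite bigR_lin; set u := bigop.body _ _ _; ring.
- move=> i _; rewrite /vscale; ring.
Qed.

Lemma esup_spec (E : ereal -> Prop) : (exists e, E e) -> is_esup E (esup E).
Proof.
move=> [e0 He0]. rewrite /esup. apply: epsilon_spec.
destruct (classic (exists u : R, forall e, E e -> ele e (Fin u))) as [[u Hu]|Hno].
- pose S := fun r => E (Fin r).
  have Sb : bound S. { exists u => r Hr. exact: (Hu _ Hr). }
  have Sne : exists r, S r.
  { destruct e0 as [r|]. - by exists r. - by have := Hu _ He0. }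
  destruct (completeness S Sb Sne) as [l [Hl1 Hl2]].
  exists (Fin l); split.
  + move=> [r|] Hr /=. * exact: Hl1. * exact: (Hu _ Hr).
  + move=> [v|] Hv //=. apply: Hl2 => r Hr. exact: (Hv _ Hr).
- exists PInf; split.
  + by move=> [r|].
  + move=> [v|] Hv //=. exfalso; apply: Hno; by exists v.
Qed.

Lemma polar_le n (phi : vec n -> ereal) x s :
  ele (polar phi x) (Fin s) <-> forall y, ele (equot (inner x y - 1) (phi y)) (Fin s).
Proof.
have H := @esup_spec (fun e => exists y, e = equot (inner x y - 1) (phi y)).
have [H1 H2] : is_esup (fun e => exists y, e = equot (inner x y - 1) (phi y))
   (polar phi x).
{ apply: H. by exists (equot (inner x (@vzero n) - 1) (phi (@vzero n))), (@vzero n). }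
split.
- move=> Hs y. move: Hs (H1 _ (ex_intro _ y erefl)).
  destruct (polar phi x); destruct (equot _ _) => //= A B. lra.
- move=> Hy. apply: H2 => e [y ->]. exact: Hy.
Qed.

Theorem proposition2 (n : nat) (phi : vec n -> ereal) (s t : R) :
  geometric_convex phi -> 0 < s -> 0 < t ->
  vsubset (polar_set (sublevel phi (1 / s))) (sublevel (polar phi) s) /\
  vsubset (sublevel (polar phi) s) (dilate (s * t + 1) (polar_set (sublevel phi t))).
Proof.
move=> [Hnn [_ [Hcv H0]]] Hs Ht; split.
- move=> x Hx. rewrite /sublevel polar_le => y.
  have := Hnn y. case Ey: (phi y) => [r|] /= Hr; last lra.
  case: (Req_EM_T r 0) => Hr0.
  + case: (Rlt_dec 0 (inner x y - 1)) => Hp /=; last lra.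
    have Hy : sublevel phi (1 / s) y.
    { rewrite /sublevel Ey /= Hr0. apply: Rlt_le. apply: Rdiv_lt_0_compat; lra. }
    have := Hx y Hy. lra.
  + have rpos : 0 < r by lra.
    have Hq : (inner x y - 1) / r * r = inner x y - 1 by field.
    destruct (Rle_dec r (1 / s)) as [Hle|Hgt].
    * have Hy : sublevel phi (1 / s) y by rewrite /sublevel Ey.
      have := Hx y Hy. move=> Hi /=. nra.
    * have Hsr : 1 < s * r.
      { have : 1 / s < r by lra. move=> H.
        have : 1 / s * s = 1 by field; lra. nra. }
      pose l := 1 / (s * r).
      have Hl : 0 < l < 1.
      { rewrite /l; split. apply: Rdiv_lt_0_compat; lra.
        apply: (Rmult_lt_reg_r (s * r)); first lra.
        have -> : 1 / (s * r) * (s * r) = 1 by field; lra. lra. }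
      have Hc := Hcv (@vzero n) y 0 r l H0 Ey Hl.
      have Hlr : (1 - l) * 0 + l * r = 1 / s by rewrite /l; field; lra.
      rewrite Hlr in Hc.
      have := Hx _ Hc. rewrite inner_lin inner_zero => Hi.
      have Hi' : l * inner x y <= 1 by lra.
      have Hl2 : l * (s * r) = 1 by rewrite /l; field; lra.
      have : inner x y <= s * r by nra.
      move=> Hxy /=. nra.
- move=> x Hx. rewrite /sublevel polar_le in Hx.
  have Hc : 0 < s * t + 1 by nra.
  exists (vscale (/ (s * t + 1)) x); split.
  + move=> y Hy. rewrite inner_scale_l.
    have Hb : inner x y <= s * t + 1.
    { have := Hx y. have := Hnn y. rewrite /sublevel in Hy.
      destruct (phi y) as [r|] => //= Hr.
      case: (Req_EM_T r 0) => Hr0.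
      - case: (Rlt_dec 0 (inner x y - 1)) => Hp //= _. nra.
      - move=> /= Hq. have rpos : 0 < r by lra.
        have Hq' : (inner x y - 1) / r * r = inner x y - 1 by field.
        simpl in Hy. have := Rmult_le_compat_r r _ _ (Rlt_le _ _ rpos) Hq. have : s * r <= s * t by apply: Rmult_le_compat_l; lra. lra. }
    apply: (Rmult_le_reg_l (s * t + 1)); first lra.
    have -> : (s * t + 1) * (/ (s * t + 1) * inner x y) = inner x y by field; lra.
    lra.
  + apply: functional_extensionality => i. rewrite /vscale. field; lra.
Qed.
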